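(* Let $\mathcal G=(N,T,I,P,S)$ be an indexed grammar with $S\in\mathrm{Useful}$, and let $\overline{\mathcal G}$ be its annotated version. Then $L(\overline{\mathcal G})=L(\mathcal G)$, and $\overline{\mathcal G}$ is productive: for every sentential form $u$ of $\overline{\mathcal G}$ with $(S,\mathrm{Useful})\Rightarrow^*_{\overline{\mathcal G}}u$ there exists $w\in T^*$ with $u\Rightarrow^*_{\overline{\mathcal G}}w$.
   Context: An indexed grammar is a tuple $\mathcal{G}=(N,T,I,P,S)$ where $N$ (non-terminals), $T$ (terminals) and $I$ (index or stack symbols) are finite pairwise disjoint alphabets, $S\in N$, and $P$ is a finite set of productions, each of one of the forms $A\to w$ ($A\in N$, $w\in T^*$), $A\to BC$ ($A,B,C\in N$), $A\to Bf$ ($A,B\in N$, $f\in I$), $Af\to B$ ($A,B\in N$, $f\in I$). A term is written $A[z]$ with $A\in N$ and $z\in I^*$ (the stack, leftmost symbol on top; $A$ alone means $A[\varepsilon]$); a sentential form is a finite word whose letters are terms or terminals. The one-step derivation relation $\Rightarrow_{\mathcal G}$ is: for sentential forms $u,v$, $uA[z]v\Rightarrow uB[z]C[z]v$ if $A\to BC\in P$; $uA[z]v\Rightarrow uB[fz]v$ if $A\to Bf\in P$; $uA[fz]v\Rightarrow uB[z]v$ if $Af\to B\in P$; $uA[z]v\Rightarrow uwv$ if $A\to w\in P$ with $w\in T^*$. $\Rightarrow^*_{\mathcal G}$ is its reflexive transitive closure and $L(\mathcal G)=\{w\in T^*: S\Rightarrow^*_{\mathcal G} w\}$. For $X\subseteq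 N$ and $z\in I^*$, $z\cdot X=\{A\in N:\exists u\in(X\cup T)^*,\ A[z]\Rightarrow^*_{\mathcal G}u\}$, where a word of $(X\cup T)^*$ is regarded as a sentential form in which every non-terminal has empty stack. $\mathrm{Useful}=\{A\in N:\exists w\in T^*,\ A\Rightarrow^*_{\mathcal G}w\}$. Assuming $S\in\mathrm{Useful}$, the annotated version of $\mathcal G$ is the indexed grammar $\overline{\mathcal G}=(\overline N,T,\overline I,\overline P,\overline S)$ with $\overline N=\{(A,X)\in N\times 2^N: A\in X\}$, $\overline I=I\times 2^N$, $\overline S=(S,\mathrm{Useful})$, and $\overline P$ consisting exactly of: $(A,X)\to w$ for every $A\to w\in P$ ($w\in T^*$) and every $X$ with $A\in X$; $(A,X)\to(B,X)(C,X)$ for every $A\to BC\in P$ and every $X$ with $A,B,C\in X$; $(A,X)\to(B,Y)(f,X)$ for every $A\to Bf\in P$ and every $X$, where $Y=f\cdot X$, $A\in X$ and $B\in Y$; $(A,Y)(f,X)\to(B,X)$ for every $Af\to B\in P$ and every $X$, where $Y=f\cdot X$, $A\in Y$ and $B\in X$. *)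

(* Defs.v *)
From Stdlib Require Import List ClassicalDescription.
From mathcomp Require Import all_boot.
Set Implicit Arguments. Unset Strict Implicit. Unset Printing Implicit Defensive.

Section IG.
Variables (N T I : Type).

(* Productions of an indexed grammar:
   RTerm A w  : A -> w      (w in T^* )
   RBin A B C : A -> B C
   RPush A B f: A -> B f
   RPop A f B : A f -> B *)
Inductive rule :=
| RTerm of N & seq T
| RBin of N & N & N
| RPush of N & N & I
| RPop of N & I & N.

(* Letters of sentential forms: a term A[z] (leftmost index = top) or a terminal. *)
Inductive sym :=
| NT of N & seq I
| Tm of T.

Definition sform := seq sym.

Inductive step (P : rule -> Prop) : sform -> sform -> Prop :=
| step_bin u v A B C z : P (RBin A B C) ->
    step P (u ++ NT A z :: v) (u ++ NT B z :: NT C z :: v)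
| step_push u v A B f z : P (RPush A B f) ->
    step P (u ++ NT A z :: v) (u ++ NT B (f :: z) :: v)
| step_pop u v A B f z : P (RPop A f B) ->
    step P (u ++ NT A (f :: z) :: v) (u ++ NT B z :: v)
| step_term u v A w z : P (RTerm A w) ->
    step P (u ++ NT A z :: v) (u ++ map Tm w ++ v).

Inductive derives (P : rule -> Prop) : sform -> sform -> Prop :=
| der_refl u : derives P u u
| der_step u v w : step P u v -> derives P v w -> derives P u w.

Definition language (P : rule -> Prop) (S : N) (w : seq T) : Prop :=
  derives P [:: NT S [::]] (map Tm w).

Definition productive (P : rule -> Prop) (S : N) : Prop :=
  forall u, derives P [:: NT S [::]] u -> exists w : seq T, derives P u (map Tm w).

End IG.

Arguments NT {N T I}.
Arguments RTerm {N T I}.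
Arguments RBin {N T I}.
Arguments RPush {N T I}.
Arguments RPop {N T I}.
Arguments Tm {N T I}.

Definition pbool (p : Prop) : bool := if excluded_middle_informative p then true else false.

Section Annot.
Variables (N T I : finType).
Variable P : seq (rule N T I).
Definition inP (r : rule N T I) : Prop := List.In r P.

(* u is in (X u T)^*: all nonterminals have empty stack and lie in X. *)
Definition over (X : {set N}) (u : sform N T I) : Prop :=
  List.Forall (fun s => match s with NT B z => z = [::] /\ B \in X | Tm _ => True end) u.

Definition dot (z : seq I) (X : {set N}) : {set N} :=
  [set A | pbool (exists u, over X u /\ derives inP [:: NT A z] u)].

Definition useful_set : {set N} :=
  [set A | pbool (exists w : seq T, derives inP [:: NT A [::]] (map Tm w))].

Definition Nbar := {p : N * {set N} | p.1 \in p.2}.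
Definition Ibar := (I * {set N})%type.

Definition Pbar (r : rule Nbar T Ibar) : Prop :=
  match r with
  | RTerm a w => inP (RTerm (sval a).1 w)
  | RBin a b c => (sval b).2 = (sval a).2 /\ (sval c).2 = (sval a).2 /\
                  inP (RBin (sval a).1 (sval b).1 (sval c).1)
  | RPush a b (f, X) => (sval a).2 = X /\ (sval b).2 = dot [:: f] X /\
                  inP (RPush (sval a).1 (sval b).1 f)
  | RPop a (f, X) b => (sval a).2 = dot [:: f] X /\ (sval b).2 = X /\
                  inP (RPop (sval a).1 f (sval b).1)
  end.

Definition Sbar (S : N) (hS : S \in useful_set) : Nbar :=
  exist (fun p : N * {set N} => p.1 \in p.2) (S, useful_set) hS.

End Annot.

(* Main.v *)
Require Import Defs.
From mathcomp Require Import all_boot.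
From Stdlib Require ClassicalDescription.
Set Implicit Arguments. Unset Strict Implicit. Unset Printing Implicit Defensive.
Section Gen.
Variables (N T I : Type) (P : rule N T I -> Prop).
Notation sf := (sform N T I).

Inductive lstep : sym N T I -> sf -> Prop :=
| ls_bin A B C z : P (RBin A B C) -> lstep (NT A z) [:: NT B z; NT C z]
| ls_push A B f z : P (RPush A B f) -> lstep (NT A z) [:: NT B (f :: z)]
| ls_pop A B f z : P (RPop A f B) -> lstep (NT A (f :: z)) [:: NT B z]
| ls_term A w z : P (RTerm A w) -> lstep (NT A z) (map Tm w).

Lemma step_inv u v : step P u v ->
  exists l s r e, lstep s e /\ u = l ++ s :: r /\ v = l ++ e ++ r.
Proof.
case=> [l r A B C z H|l r A B f z H|l r A B f z H|l r A w z H];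
  do 4 eexists; (split; [by constructor; exact H| by split]).
Qed.

Lemma step_ctx l s r e : lstep s e -> step P (l ++ s :: r) (l ++ e ++ r).
Proof.
case=> [A B C z H|A B f z H|A B f z H|A w z H].
- exact: step_bin.
- exact: step_push.
- exact: step_pop.
- exact: step_term.
Qed.

Lemma lstep1 s e : lstep s e -> step P [:: s] e.
Proof. by move=> /(step_ctx [::] [::]); rewrite /= cats0. Qed.

Lemma step_frame l u v r : step P u v -> step P (l ++ u ++ r) (l ++ v ++ r).
Proof.
move=> /step_inv [l0 [s [r0 [e [H [-> ->]]]]]].
have -> : l ++ (l0 ++ s :: r0) ++ r = (l ++ l0) ++ s :: (r0 ++ r) by rewrite -!catA.
have -> : l ++ (l0 ++ e ++ r0) ++ r = (l ++ l0) ++ e ++ (r0 ++ r) by rewrite -!catA.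
exact: step_ctx.
Qed.

Lemma derives_trans u v w : derives P u v -> derives P v w -> derives P u w.
Proof. elim=> // u0 v0 w0 H _ IH /IH; exact: der_step. Qed.

Lemma derives1 u v : step P u v -> derives P u v.
Proof. move=> H; apply: der_step H (der_refl _ _). Qed.

Lemma derives_ctx l u v r : derives P u v -> derives P (l ++ u ++ r) (l ++ v ++ r).
Proof.
elim=> [u0|u0 v0 w0 H _ IH]; first exact: der_refl.
apply: der_step IH; exact: step_frame.
Qed.

Lemma derives_cat u1 v1 u2 v2 : derives P u1 v1 -> derives P u2 v2 ->
  derives P (u1 ++ u2) (v1 ++ v2).
Proof.
move=> H1 H2; apply: (@derives_trans _ (v1 ++ u2)).
  by have := derives_ctx [::] u2 H1.
by have := derives_ctx v1 [::] H2; rewrite !cats0.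
Qed.

Inductive derivesn : nat -> sf -> sf -> Prop :=
| dn0 u : derivesn 0 u u
| dnS n u v w : step P u v -> derivesn n v w -> derivesn n.+1 u w.

Lemma derives_n u v : derives P u v -> exists n, derivesn n u v.
Proof.
elim=> [u0|u0 v0 w0 H _ [n Hn]]; first by exists 0; constructor.
by exists n.+1; apply: dnS H Hn.
Qed.

Lemma n_derives n u v : derivesn n u v -> derives P u v.
Proof. elim=> [u0|m u0 v0 w0 H _ IH]; [exact: der_refl| exact: der_step H IH]. Qed.

Lemma cat_split (u1 u2 l r : sf) s : u1 ++ u2 = l ++ s :: r ->
  (exists m, u1 = l ++ s :: m /\ r = m ++ u2) \/
  (exists l', l = u1 ++ l' /\ u2 = l' ++ s :: r).
Proof.
elim: u1 l => [|x u1 IH] l /=; first by move=> ->; right; exists l.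
case: l => [|y l] /= [<- E]; first by left; exists u1.
case: (IH _ E) => [[m [-> ->]]|[l' [-> ->]]]; first by left; exists m.
by right; exists l'.
Qed.

Lemma derivesn_split n u1 u2 w : derivesn n (u1 ++ u2) w ->
  exists n1 n2 w1 w2, n = n1 + n2 /\ derivesn n1 u1 w1 /\ derivesn n2 u2 w2 /\ w = w1 ++ w2.
Proof.
move E : (u1 ++ u2) => u H; elim: H u1 u2 E => [u0|m u0 v0 w0 Hs _ IH] u1 u2 E.
  by exists 0, 0, u1, u2; do !split; try constructor.
move: Hs => /step_inv [l [s [r [e [Hl [Eu Ev]]]]]].
rewrite -E in Eu; case: (cat_split Eu) => [[m0 [E1 E2]]|[l' [E1 E2]]].
- have : v0 = (l ++ e ++ m0) ++ u2 by rewrite Ev E2 -!catA.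
  move=> /esym /IH [n1 [n2 [w1 [w2 [-> [H1 [H2 ->]]]]]]].
  exists n1.+1, n2, w1, w2; do !split => //; rewrite E1; apply: dnS H1.
  exact: step_ctx.
- have : v0 = u1 ++ (l' ++ e ++ r) by rewrite Ev E1 -!catA.
  move=> /esym /IH [n1 [n2 [w1 [w2 [-> [H1 [H2 ->]]]]]]].
  exists n1, n2.+1, w1, w2; do !split => //; first by rewrite addnS.
  rewrite E2; apply: dnS H2; exact: step_ctx.
Qed.

Lemma noNT (w : seq T) l A z r : map (@Tm N T I) w = l ++ NT A z :: r -> False.
Proof. by elim: l w => [|x l IH] [|t w] //= [_ /IH]. Qed.

Lemma lstep_NT s e : lstep s e -> exists A z, s = NT A z.
Proof. by case=> *; do 2 eexists. Qed.

Lemma stuck n (w : seq T) v : derivesn n (map (@Tm N T I) w) v -> v = map Tm w.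
Proof.
move E : (map (@Tm N T I) w) => u H; case: H E => // m u0 v0 w0 /step_inv [l [s [r [e [Hl [-> _]]]]]] _.
by case: (lstep_NT Hl) => A [z ->] E; exfalso; apply: noNT E.
Qed.

Lemma map_Tm_cat (w : seq T) (v1 v2 : sf) : map (@Tm N T I) w = v1 ++ v2 ->
  exists w1 w2, w = w1 ++ w2 /\ v1 = map Tm w1 /\ v2 = map Tm w2.
Proof.
elim: v1 w => [|x v1 IH] w /=; first by move=> <-; exists [::], w.
case: w => [|t w] //= [<- /IH [w1 [w2 [-> [-> ->]]]]].
by exists (t :: w1), w2.
Qed.

Lemma single_inv (x : sym N T I) l s r : [:: x] = l ++ s :: r -> l = [::] /\ s = x /\ r = [::].
Proof. by case: l => [|y [|z l]] //= [-> ->]. Qed.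

Lemma Forall_cat (Q : sym N T I -> Prop) (u1 u2 : sf) :
  List.Forall Q (u1 ++ u2) <-> List.Forall Q u1 /\ List.Forall Q u2.
Proof.
elim: u1 => [|x u1 IH] /=; first by split=> [H|[]] //; split.
rewrite !List.Forall_cons_iff IH; tauto.
Qed.

Lemma concat_term (u : sf) :
  List.Forall (fun s => exists w : seq T, derives P [:: s] (map Tm w)) u ->
  exists w : seq T, derives P u (map Tm w).
Proof.
elim: u => [|x u IH]; first by exists [::]; constructor.
move=> /List.Forall_cons_iff [[w1 H1] /IH [w2 H2]]; exists (w1 ++ w2).
by rewrite map_cat; apply: (derives_cat H1 H2).
Qed.

End Gen.
Section Ext.
Variables (N T I : Type) (P : rule N T I -> Prop).
Definition ext1 (y : seq I) (s : sym N T I) : sym N T I :=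
  match s with NT A z => NT A (z ++ y) | Tm t => Tm t end.
Definition ext y (u : sform N T I) := map (ext1 y) u.

Lemma ext_Tm y (w : seq T) : ext y (map Tm w) = map Tm w.
Proof. by elim: w => //= t w ->. Qed.

Lemma lstep_ext y s e : lstep P s e -> lstep P (ext1 y s) (ext y e).
Proof.
case=> [A B C z H|A B f z H|A B f z H|A w z H] /=; try by constructor.
by rewrite ext_Tm; constructor.
Qed.

Lemma derives_ext y u v : derives P u v -> derives P (ext y u) (ext y v).
Proof.
elim=> [u0|u0 v0 w0 H _ IH]; first exact: der_refl.
apply: der_step IH; move: H => /step_inv [l [s [r [e [Hl [-> ->]]]]]].
rewrite /ext !map_cat /=; apply: step_ctx; exact: lstep_ext.
Qed.
End Ext.

Lemma pboolP (p : Prop) : pbool p = true <-> p.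
Proof. by rewrite /pbool; case: ClassicalDescription.excluded_middle_informative. Qed.

Section G.
Variables (N T I : finType) (P : seq (rule N T I)).
Notation G := (inP P).
Notation U := (useful_set P).

Lemma in_dot A z X : A \in dot P z X <-> exists u, Defs.over X u /\ derives G [:: NT A z] u.
Proof. rewrite inE; exact: pboolP. Qed.

Lemma in_useful A : A \in U <-> exists w : seq T, derives G [:: NT A [::]] (map Tm w).
Proof. rewrite inE; exact: pboolP. Qed.

Definition dotS (y : seq I) : {set N} := foldr (fun f acc => dot P [:: f] acc) U y.

Lemma over_mono (X Y : {set N}) (u : sform N T I) : {subset X <= Y} -> Defs.over X u -> Defs.over Y u.
Proof.
move=> sXY; apply: List.Forall_impl => -[B z|t] //= [-> H]; split=> //; exact: sXY.
Qed.

Lemma over_Tm X (w : seq T) : Defs.over X (map (@Tm N T I) w).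
Proof. by elim: w => [|t w IH] /=; constructor. Qed.

Lemma K n : forall C s y X v, derivesn G n [:: NT C (s ++ y)] v -> Defs.over X v ->
  exists v', derives G [:: NT C s] v' /\ Defs.over (dot P y X) v'.
Proof.
elim/ltn_ind: n => n IH C [|g s] y X v Hd Hv.
  exists [:: NT C [::]]; split; first exact: der_refl.
  constructor => //; split => //; apply/in_dot; exists v; split => //; exact: n_derives Hd.
case: n IH Hd => [|n] IH Hd.
  by inversion Hd; subst; move: Hv => /List.Forall_cons_iff [[]].
inversion Hd as [|m u0 v0 w0 Hs Hn]; subst.
move: Hs => /step_inv [l [s0 [r [e [Hl [/single_inv [El [Es Er]] Ev]]]]]]; subst.
rewrite cats0 in Hn.
inversion Hl as [A B C' z H E1 E2|A B f z H E1 E2|A B f z H E1 E2|A w z H E1 E2]; subst.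
- move: Hn => /(derivesn_split (u1 := [:: NT B (g :: s ++ y)])).
  move=> [n1 [n2 [w1 [w2 [En [H1 [H2 Ew]]]]]]].
  move: Hv; rewrite Ew => /Forall_cat [Hv1 Hv2].
  have [v1 [D1 O1]] := IH n1 (ltac:(by rewrite En ltnS leq_addr)) B (g :: s) y X w1 H1 Hv1.
  have [v2 [D2 O2]] := IH n2 (ltac:(by rewrite En ltnS leq_addl)) C' (g :: s) y X w2 H2 Hv2.
  exists (v1 ++ v2); split; last by apply/Forall_cat.
  apply: der_step; first by apply: lstep1; constructor; exact: H.
  exact: (derives_cat (u1 := [:: NT B (g :: s)]) D1 D2).
- have [v1 [D1 O1]] := IH n (ltnSn n) B (f :: g :: s) y X v Hn Hv.
  exists v1; split => //; apply: der_step D1; apply: lstep1; constructor; exact: H.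
- have [v1 [D1 O1]] := IH n (ltnSn n) B s y X v Hn Hv.
  exists v1; split => //; apply: der_step D1; apply: lstep1; constructor; exact: H.
- have Ev := stuck Hn; subst; exists (map Tm w); split; last exact: over_Tm.
  apply: derives1; apply: lstep1; constructor; exact: H.
Qed.

Lemma over_term (X : {set N}) (u : sform N T I) : {subset X <= U} -> Defs.over X u ->
  exists w : seq T, derives G u (map Tm w).
Proof.
move=> sXU Hu; apply: concat_term; apply: List.Forall_impl Hu => -[B z|t] /=.
  by move=> [-> /sXU /in_useful].
by move=> _; exists [:: t]; exact: der_refl.
Qed.

Lemma M y A : A \in dot P y U -> A \in dotS y.
Proof.
elim: y A => [|f y IH] A /in_dot [u [Hu Hd]] /=.
  have [w Hw] := over_term (fun x (h : x \in U) => h) Hu.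
  apply/in_useful; exists w; exact: derives_trans Hd Hw.
have [n Hn] := derives_n Hd.
have [v' [D' O']] := K (s := [:: f]) Hn Hu.
apply/in_dot; exists v'; split => //; apply: over_mono O'; exact: IH.
Qed.

Lemma D y A : A \in dotS y -> exists w : seq T, derives G [:: NT A y] (map Tm w).
Proof.
elim: y A => [|f y IH] A /=; first by move/in_useful.
move=> /in_dot [v [Hv Hd]].
have := derives_ext y Hd => /= Hd'.
have Hall : forall v0 : sform N T I, Defs.over (dotS y) v0 ->
    exists w : seq T, derives G (ext y v0) (map Tm w).
  move=> v0 Hv0; apply: concat_term; elim: v0 Hv0 => [|x v0 IHv] Hv0; first by constructor.
  move: Hv0 => /List.Forall_cons_iff [Hx Hv0]; constructor; last exact: IHv.
  case: x Hx => [B z|t] /=; first by move=> [-> /IH].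
  by move=> _; exists [:: t]; exact: der_refl.
have [w Hw] := Hall v Hv.
exists w; exact: derives_trans Hd' Hw.
Qed.
Fixpoint goodst (zb : seq (Ibar N I)) : Prop :=
  match zb with [::] => True | (f, Y) :: zb' => Y = dotS (map fst zb') /\ goodst zb' end.

Notation Gb := (Pbar P).

Lemma Tm_inj : injective (@Tm N T I).
Proof. by move=> x y []. Qed.

Lemma L n : forall (a : Nbar N) (zb : seq (Ibar N I)) (w : seq T), goodst zb ->
  (sval a).2 = dotS (map fst zb) ->
  derivesn G n [:: NT (sval a).1 (map fst zb)] (map Tm w) ->
  derives Gb [:: NT a zb] (map Tm w).
Proof.
elim/ltn_ind: n => n IH a zb w Hg Ha Hd.
case: n IH Hd => [|n] IH Hd.
  exfalso; inversion Hd as [u0 E H0 H1|]; move: H1; clear; by case: w.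
inversion Hd as [|m u0 v0 w0 Hs Hn]; subst.
move: Hs => /step_inv [l [s0 [r [e [Hl [/single_inv [El [Es Er]] Ev]]]]]]; subst.
rewrite cats0 in Hn.
move Ex : (NT (sval a).1 (map fst zb)) => x in Hl.
case: Hl Hn Ex => [A B C' z H|A B f z H|A B f z H|A w' z H] Hn [EA Ez]; subst.
- move: Hn => /(derivesn_split (u1 := [:: NT B (map fst zb)])).
  move=> [n1 [n2 [w1 [w2 [En [H1 [H2 Ew]]]]]]].
  have [wa [wb [-> [E1 E2]]]] := map_Tm_cat Ew; subst.
  have hB : B \in (sval a).2.
    rewrite Ha; apply: M; apply/in_dot; exists (map Tm wa); split; [exact: over_Tm|exact: n_derives H1].
  have hC : C' \in (sval a).2.
    rewrite Ha; apply: M; apply/in_dot; exists (map Tm wb); split; [exact: over_Tm|exact: n_derives H2].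
  pose b : Nbar N := exist (fun p : N * {set N} => p.1 \in p.2) (B, (sval a).2) hB.
  pose c : Nbar N := exist (fun p : N * {set N} => p.1 \in p.2) (C', (sval a).2) hC.
  apply: der_step; first by apply: lstep1; apply: (@ls_bin _ _ _ _ a b c zb).
  rewrite map_cat; apply: (derives_cat (u1 := [:: NT b zb])).
    by apply: (IH n1 _ b zb wa Hg Ha H1); rewrite ltnS leq_addr.
  by apply: (IH n2 _ c zb wb Hg Ha H2); rewrite ltnS leq_addl.
- have hB : B \in dot P [:: f] (sval a).2.
    rewrite Ha; apply: (M (y := f :: map fst zb)); apply/in_dot; exists (map Tm w); split;
      [exact: over_Tm|exact: n_derives Hn].
  pose b : Nbar N := exist (fun p : N * {set N} => p.1 \in p.2) (B, dot P [:: f] (sval a).2) hB.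
  apply: der_step; first by apply: lstep1; apply: (@ls_push _ _ _ _ a b (f, (sval a).2) zb).
  apply: (IH n _ b ((f, (sval a).2) :: zb) w) => //=; by rewrite -?Ha.
- clear Hd; case: zb Hg Ha Ez => [|[g X] zb'] //= [EX Hg] Ha [Ef Ez]; subst g X z; rewrite /= in Hn.
  have hB : B \in dotS (map fst zb').
    apply: M; apply/in_dot; exists (map Tm w); split; [exact: over_Tm|exact: n_derives Hn].
  pose b : Nbar N := exist (fun p : N * {set N} => p.1 \in p.2) (B, dotS (map fst zb')) hB.
  apply: der_step; first by apply: lstep1; apply: (@ls_pop _ _ _ _ a b (f, dotS (map fst zb')) zb').
  exact: (IH n _ b zb' w Hg).
- have := stuck Hn => /inj_map E; rewrite (E Tm_inj).
  by apply: derives1; apply: lstep1; apply: (@ls_term _ _ _ _ a w' zb).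
Qed.

End G.

Section Final.
Variables (N T I : finType) (P : seq (rule N T I)).
Notation G := (inP P).
Notation Gb := (Pbar P).

Definition projs (s : sym (Nbar N) T (Ibar N I)) : sym N T I :=
  match s with NT a zb => NT (sval a).1 (map fst zb) | Tm t => Tm t end.

Lemma projs_Tm (w : seq T) : map projs (map Tm w) = map Tm w.
Proof. by elim: w => //= t w ->. Qed.

Lemma lstep_proj s e : lstep Gb s e -> lstep G (projs s) (map projs e).
Proof.
case=> [a b c z H|a b [g X] z H|a b [g X] z H|a w z H] /=.
- by case: H => E1 [E2 H]; constructor.
- by case: H => E1 [E2 H]; constructor.
- by case: H => E1 [E2 H]; constructor.
- by rewrite projs_Tm; constructor.
Qed.

Lemma derives_proj u v : derives Gb u v -> derives G (map projs u) (map projs v).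
Proof.
elim=> [u0|u0 v0 w0 H _ IH]; first exact: der_refl.
apply: der_step IH; move: H => /step_inv [l [s [r [e [Hl [-> ->]]]]]].
rewrite !map_cat /=; apply: step_ctx; exact: lstep_proj.
Qed.

Definition goodsym (s : sym (Nbar N) T (Ibar N I)) : Prop :=
  match s with NT a zb => goodst P zb /\ (sval a).2 = dotS P (map fst zb) | Tm _ => True end.

Lemma good_Tm (w : seq T) : List.Forall goodsym (map Tm w).
Proof. by elim: w => [|t w IH]; constructor. Qed.

Lemma good_lstep s e : lstep Gb s e -> goodsym s -> List.Forall goodsym e.
Proof.
case=> [a b c z H|a b [g X] z H|a b [g X] z H|a w z H] /=.
- case: H => E1 [E2 H] [Hg Ha]; constructor; first by split => //=; rewrite E1.
  by constructor; first by split => //=; rewrite E2.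
- case: H => E1 [E2 H] [Hg Ha]; constructor => //; split; first by split => //; rewrite -E1 Ha.
  by rewrite E2 /= -E1 Ha.
- case: H => E1 [E2 H] [[EX Hg] Ha]; constructor => //; split => //; by rewrite E2.
- by move=> _; exact: good_Tm.
Qed.

Lemma good_derives u v : derives Gb u v -> List.Forall goodsym u -> List.Forall goodsym v.
Proof.
elim=> // u0 v0 w0 H _ IH Hu; apply: IH.
move: H Hu => /step_inv [l [s [r [e [Hl [-> ->]]]]]].
move=> /Forall_cat [Hl' /List.Forall_cons_iff [Hs Hr]].
apply/Forall_cat; split => //; apply/Forall_cat; split => //; exact: good_lstep Hs.
Qed.

End Final.

Theorem lemma4p2 (N T I : finType) (P : seq (rule N T I)) (S : N)
    (hS : S \in useful_set P) :
  (forall w : seq T, language (Pbar P) (Sbar hS) w <-> language (inP P) S w) /\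
  productive (Pbar P) (Sbar hS).
Proof.
split.
  move=> w; split.
    by rewrite /language => /derives_proj; rewrite projs_Tm.
  rewrite /language => /derives_n [n Hn].
  exact: (@L N T I P n (Sbar hS) [::] w Logic.I Logic.eq_refl Hn).
move=> u Hu.
have Hg : List.Forall (@goodsym N T I P) u.
  apply: (good_derives Hu); by constructor => //; split.
apply: concat_term; apply: List.Forall_impl Hg => -[a zb|t] /=.
  move=> [Hg Ha]; have := valP a; rewrite Ha => /D [w /derives_n [n Hn]].
  by exists w; exact: L Hn.
by move=> _; exists [:: t]; exact: der_refl.
Qed.
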